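(* Define $H:\mathbb{N}^+\cup\{\bot\}\to\mathbb{N}^+\cup\{\bot\}$ by $H(\bot)=\bot$, $H(n)=3n/4$ if $n\equiv0\pmod4$, $H(n)=(9n+1)/8$ if $n\equiv7\pmod 8$, and $H(n)=\bot$ otherwise. Then every $H$-trajectory $(n,H(n),H^2(n),\dots)$ with $n\in\mathbb{N}^+$ contains $\bot$ if and only if every Collatz trajectory that does not contain $1$ contains some element $m$ with $m\equiv5\pmod8$ or $m\equiv7\pmod8$.
   Context: $C:\mathbb{N}^+\to\mathbb{N}^+$ is the Collatz function $C(n)=n/2$ for $n$ even and $C(n)=3n+1$ for $n$ odd; the Collatz trajectory of $n$ is $(n,C(n),C^2(n),\dots)$. *)

(* Defs.v *)
From mathcomp Require Import all_boot.
Set Implicit Arguments. Unset Strict Implicit. Unset Printing Implicit Defensive.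

(* Collatz function C(n) = n/2 (n even), 3n+1 (n odd), on nat; only applied to n >= 1. *)
Definition collatz (n : nat) : nat := if odd n then 3 * n + 1 else n %/ 2.

(* The map H on N+ ∪ {⊥}, with ⊥ represented by None. *)
Definition H (x : option nat) : option nat :=
  match x with
  | None => None
  | Some n =>
      if n %% 4 == 0 then Some (3 * n %/ 4)
      else if n %% 8 == 7 then Some ((9 * n + 1) %/ 8)
      else None
  end.

(* Main.v *)
Require Import Defs.
From mathcomp Require Import all_boot.
From mathcomp Require Import zify.
From Stdlib Require Import Classical.

Lemma co k : collatz (2*k+1) = 6*k+4.
Proof. rewrite /collatz oddD oddM /=. lia. Qed.
Lemma ce k : collatz (2*k) = k.
Proof. rewrite /collatz oddM /=. lia. Qed.

Lemma it1 {v w j N} : iter j collatz N = v -> collatz v = w -> iter j.+1 collatz N = w.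
Proof. by rewrite iterS => -> . Qed.

Lemma bA c : [/\ iter 1 collatz (6*(4*c)+1) = 72*c+4,
                 iter 2 collatz (6*(4*c)+1) = 36*c+2 &
                 iter 3 collatz (6*(4*c)+1) = 6*(3*c)+1].
Proof.
have h1 : iter 1 collatz (6*(4*c)+1) = 72*c+4.
  apply: (@it1 (6*(4*c)+1)) => //. have -> : 6*(4*c)+1 = 2*(12*c)+1 by lia. rewrite co; lia.
have h2 : iter 2 collatz (6*(4*c)+1) = 36*c+2.
  apply: (it1 h1). have -> : 72*c+4 = 2*(36*c+2) by lia. by rewrite ce.
split => //. apply: (it1 h2). have -> : 36*c+2 = 2*(6*(3*c)+1) by lia. by rewrite ce.
Qed.

Lemma bB c : [/\ iter 1 collatz (6*(8*c+7)+1) = 144*c+130,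
                 iter 2 collatz (6*(8*c+7)+1) = 72*c+65,
                 iter 3 collatz (6*(8*c+7)+1) = 216*c+196,
                 iter 4 collatz (6*(8*c+7)+1) = 108*c+98 &
                 iter 5 collatz (6*(8*c+7)+1) = 6*(9*c+8)+1].
Proof.
have h1 : iter 1 collatz (6*(8*c+7)+1) = 144*c+130.
  apply: (@it1 (6*(8*c+7)+1)) => //. have -> : 6*(8*c+7)+1 = 2*(24*c+21)+1 by lia. rewrite co; lia.
have h2 : iter 2 collatz (6*(8*c+7)+1) = 72*c+65.
  apply: (it1 h1). have -> : 144*c+130 = 2*(72*c+65) by lia. by rewrite ce.
have h3 : iter 3 collatz (6*(8*c+7)+1) = 216*c+196.
  apply: (it1 h2). have -> : 72*c+65 = 2*(36*c+32)+1 by lia. rewrite co; lia.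
have h4 : iter 4 collatz (6*(8*c+7)+1) = 108*c+98.
  apply: (it1 h3). have -> : 216*c+196 = 2*(108*c+98) by lia. by rewrite ce.
split => //. apply: (it1 h4). have -> : 108*c+98 = 2*(6*(9*c+8)+1) by lia. by rewrite ce.
Qed.

Lemma bC c : iter 2 collatz (6*(8*c+3)+1) = 72*c+29.
Proof.
have h1 : iter 1 collatz (6*(8*c+3)+1) = 144*c+58.
  apply: (@it1 (6*(8*c+3)+1)) => //. have -> : 6*(8*c+3)+1 = 2*(24*c+9)+1 by lia. rewrite co; lia.
apply: (it1 h1). have -> : 144*c+58 = 2*(72*c+29) by lia. by rewrite ce.
Qed.

Definition Inf x := forall k, iter k H (Some x) <> None.

Lemma InfS x y : Inf x -> H (Some x) = Some y -> Inf y.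
Proof. move=> hI hH k. by rewrite -hH -iterSr. Qed.

Lemma L m : forall j x, j < m -> 0 < x -> Inf x ->
  let y := iter j collatz (6*x+1) in y <> 1 /\ y %% 8 <> 5 /\ y %% 8 <> 7.
Proof.
elim: m => // m IH j x hj hx hI.
have hH := hI 1. rewrite /= in hH.
case: ifP hH => h4 hH.
  have ex : x = 4 * (x %/ 4) by lia.
  set c := x %/ 4 in ex. rewrite ex.
  have [e1 e2 e3] := bA c.
  case: (ltnP j 3) => hj3.
    case: j hj hj3 => [|[|[|j]]] //= _ _; [lia| |].
    - move: e1 => /= ->; lia.
    - move: e2 => /= ->; lia.
  have -> : j = (j - 3) + 3 by lia.
  rewrite iterD e3. apply: IH; [lia|lia|].
  apply: (InfS _ _ hI). by rewrite /= h4; congr Some; lia.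
case: ifP hH => h7 hH //.
have ex : x = 8 * (x %/ 8) + 7 by lia.
set c := x %/ 8 in ex. rewrite ex.
have [e1 e2 e3 e4 e5] := bB c.
case: (ltnP j 5) => hj5.
  case: j hj hj5 => [|[|[|[|[|j]]]]] //= _ _; [lia| | | |].
  - move: e1 => /= ->; lia.
  - move: e2 => /= ->; lia.
  - move: e3 => /= ->; lia.
  - move: e4 => /= ->; lia.
have -> : j = (j - 5) + 5 by lia.
rewrite iterD e5. apply: IH; [lia|lia|].
apply: (InfS _ _ hI). by rewrite /= h4 h7; congr Some; lia.
Qed.

Definition bad N := forall k, iter k collatz N <> 1 /\ iter k collatz N %% 8 <> 5 /\ iter k collatz N %% 8 <> 7.

Lemma M N x j : bad N -> 0 < x -> iter j collatz N = 6*x+1 ->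
  exists x' j', [/\ 0 < x', H (Some x) = Some x' & iter j' collatz N = 6*x'+1].
Proof.
move=> hb hx hj.
have hb0 := hb j. rewrite hj in hb0.
case: (boolP (x %% 4 == 0)) => h4.
  have ex : x = 4 * (x %/ 4) by lia.
  have [_ _ e3] := bA (x %/ 4).
  exists (3 * (x %/ 4)), (3 + j); split; [lia| |].
    by rewrite /= h4; congr Some; lia.
  by rewrite iterD hj {1}ex e3.
case: (boolP (x %% 8 == 7)) => h7.
  have ex : x = 8 * (x %/ 8) + 7 by lia.
  have [_ _ _ _ e5] := bB (x %/ 8).
  exists (9 * (x %/ 8) + 8), (5 + j); split; [lia| |].
    by rewrite /= (negbTE h4) h7; congr Some; lia.
  by rewrite iterD hj {1}ex e5.
have ex : x = 8 * (x %/ 8) + 3 by lia.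
have := bC (x %/ 8). rewrite -ex -hj -iterD => e.
have := hb (2 + j). rewrite e. lia.
Qed.

Lemma reach_odd m : forall N, N < m -> 0 < N -> exists j, odd (iter j collatz N).
Proof.
elim: m => // m IH N hN hp.
case: (boolP (odd N)) => ho; first by exists 0.
have e : collatz N = N %/ 2 by rewrite /collatz (negbTE ho).
have [|//|j hj] := IH (N %/ 2).
- have : N = (N %/ 2) * 2 + N %% 2 := divn_eq N 2. rewrite modn2 (negbTE ho). lia.
- have : N = (N %/ 2) * 2 + N %% 2 := divn_eq N 2. rewrite modn2 (negbTE ho). lia.
by exists j.+1; rewrite iterSr e.
Qed.

Lemma start N : 0 < N -> bad N -> exists x j, 0 < x /\ iter j collatz N = 6*x+1.
Proof.
move=> hN hb.
have [j hj] := reach_odd _ _ (ltnSn N) hN.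
set o := iter j collatz N in hj.
have oe : o = 2 * o./2 + 1 by rewrite -{1}(odd_double_half o) hj; lia.
have hbj := hb j. rewrite -/o in hbj.
have [i [a [ha hi]]] : exists i a, 0 < a /\ iter i collatz N = 8*a+1.
  case: (boolP (o %% 8 == 1)) => h1.
    exists j, (o %/ 8); split; [lia|]. rewrite -/o. lia.
  have ea : o = 8 * (o %/ 8) + 3 by lia.
  set a := o %/ 8 in ea.
  have e1 : iter j.+1 collatz N = 24*a+10.
    apply: (it1 (v:=o)) => //. rewrite ea (_ : 8*a+3 = 2*(4*a+1)+1); last lia. rewrite co; lia.
  have e2 : iter j.+2 collatz N = 12*a+5.
    apply: (it1 e1). rewrite (_ : 24*a+10 = 2*(12*a+5)); last lia. by rewrite ce.
  have := hb j.+2. rewrite e2 => h.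
  exists j.+2, ((12*a+5) %/ 8); split; lia.
exists a, (3 + i); split => //.
rewrite iterD hi.
have e1' : iter 1 collatz (8*a+1) = 24*a+4.
  rewrite /= (_ : 8*a+1 = 2*(4*a)+1); last lia. rewrite co; lia.
have e2' : iter 2 collatz (8*a+1) = 2*(6*a+1).
  apply: (it1 e1'). rewrite (_ : 24*a+4 = 2*(2*(6*a+1))); last lia. by rewrite !ce.
apply: (it1 e2'). by rewrite ce.
Qed.

Theorem mainTheorem18 :
  (forall n : nat, 0 < n -> exists k : nat, iter k H (Some n) = None) <->
  (forall n : nat, 0 < n -> (forall k : nat, iter k collatz n <> 1) ->
     exists k : nat, iter k collatz n %% 8 = 5 \/ iter k collatz n %% 8 = 7).
Proof.
split.
- move=> hH N hN h1.
  apply: NNPP => hne.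
  have hb : bad N.
    move=> k; split; first exact: h1.
    split => h; apply: hne; exists k; auto.
  have [x [j [hx hj]]] := start _ hN hb.
  have [k hk] := hH x hx.
  suff : forall k, exists y j, [/\ 0 < y, iter k H (Some x) = Some y & iter j collatz N = 6*y+1].
    by move=> /(_ k) [y [j' [_ hy _]]]; rewrite hy in hk.
  elim => [|k' [y [j' [hy hky hj']]]]; first by exists x, j.
  have [y' [j'' [hy' hH' hj'']]] := M _ _ _ hb hy hj'.
  exists y', j''; split => //. by rewrite iterS hky.
- move=> hC n hn.
  apply: NNPP => hne.
  have hI : Inf n by move=> k hk; apply: hne; exists k.
  have [||k hk] := hC (6*n+1).
  + lia.
  + move=> k. have := L _ _ _ (ltnSn k) hn hI. by case.
  have := L _ _ _ (ltnSn k) hn hI. case=> _ []. case: hk; lia.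
Qed.
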